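(* Let $I$ be a fuzzy implication function, $T$ a t-norm and $j\in\{1,\dots,n_c\}$. Suppose $I$ satisfies the monotonicity of the generalized modus ponens with respect to $T$, i.e. $T(\tilde x,I(\tilde x,y))\le T(x,I(x,y))$ for all $x,\tilde x,y\in[0,1]$ with $\tilde x\le x$. Then for all $R^{S,L}_j,R^{\tilde S,\tilde L}_j\in\mathcal{R}^{I,T}_j$ with $R^{S,L}_j\prec R^{\tilde S,\tilde L}_j$ and all $E^d\in E$, $$\mu_{eval}^{R^{\tilde S,\tilde L}_j,E^d}\le\mu_{eval}^{R^{S,L}_j,E^d},$$ and consequently $\sum_{d=1}^{n_e}\mu_{eval}^{R^{\tilde S,\tilde L}_j,E^d}\le\sum_{d=1}^{n_e}\mu_{eval}^{R^{S,L}_j,E^d}$.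
   Context: A fuzzy implication function is a map $I:[0,1]^2\to[0,1]$ decreasing in the first variable, increasing in the second, with $I(0,0)=I(1,1)=1$, $I(1,0)=0$. A t-norm is a commutative, associative, increasing binary operation on $[0,1]$ with neutral element $1$. Setting: features $X_1,\dots,X_{n_f}$ with domains $D_m\subseteq\mathbb{R}$, target $Y$ with domain $D_Y$; examples $E=\{E^d=(e^d_1,\dots,e^d_{n_f},y^d):d=1,\dots,n_e\}$; each feature $X_m$ has labels $LL_m^1,\dots,LL_m^{l_m}$ with membership functions $\mu_{LL_m^n}:D_m\to[0,1]$; classes $\mathrm{Class}_1,\dots,\mathrm{Class}_{n_c}$ with $\mu_{\mathrm{Class}_j}:D_Y\to[0,1]$. A rule $R^{S,L}_j$ is given by a class index $j$, a set of features $S=\{X_{m_1},\dots,X_{m_s}\}$ and a set $L$ of labels containing exactly one label $LL^{n_{m_i}}_{m_i}$ per feature in $S$. $\mathcal{R}^{I,T}_j$ is the set of such rules with class $j$, evaluated with $T$ and $I$. For an example $E^d$: $\mu_{ant}^{R^{S,L}_j,E^d}=T(\mu_{LL^{n_{m_1}}_{m_1}}(e^d_{m_1}),\dots,\mu_{LL^{n_{m_s}}_{m_s}}(e^d_{m_s}))$, $\mu_{con}^{R^{S,L}_j,E^d}=\mu_{\mathrm{Class}_j}(y^d)$, $\mu_{eval}^{R^{S,L}_j,E^d}=T\big(\mu_{ant}^{R^{S,L}_j,E^d},I(\mu_{ant}^{R^{S,L}_j,E^d},\mu_{con}^{R^{S,L}_j,E^d})\big)$. $R^{\tilde S,\tilde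 L}_{\tilde j}$ is a refinement of $R^{S,L}_j$, written $R^{S,L}_j\prec R^{\tilde S,\tilde L}_{\tilde j}$, iff $\tilde j=j$, $S\subsetneq\tilde S$, and every label of $L$ belongs to $\tilde L$. *)

(* Defs.v *)
From mathcomp Require Import all_boot all_order all_algebra.
Set Implicit Arguments. Unset Strict Implicit. Unset Printing Implicit Defensive.
Import Order.TTheory GRing.Theory Num.Theory.
Local Open Scope ring_scope.

Section Fuzzy.
Variable R : realFieldType.

Definition unit_int (x : R) : Prop := 0 <= x <= 1.

Definition is_tnorm (T : R -> R -> R) : Prop :=
  [/\ (forall x y, unit_int x -> unit_int y -> unit_int (T x y)),
      (forall x y, unit_int x -> unit_int y -> T x y = T y x),
      (forall x y z, unit_int x -> unit_int y -> unit_int z ->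
         T x (T y z) = T (T x y) z),
      (forall x x' y y', unit_int x -> unit_int x' -> unit_int y -> unit_int y' ->
         x <= x' -> y <= y' -> T x y <= T x' y') &
      (forall x, unit_int x -> T x 1 = x)].

Definition is_fuzzy_implication (I : R -> R -> R) : Prop :=
  [/\ (forall x y, unit_int x -> unit_int y -> unit_int (I x y)),
      (forall x x' y, unit_int x -> unit_int x' -> unit_int y ->
         x <= x' -> I x' y <= I x y),
      (forall x y y', unit_int x -> unit_int y -> unit_int y' ->
         y <= y' -> I x y <= I x y'),
      I 0 0 = 1 & I 1 1 = 1 /\ I 1 0 = 0].

Definition mon_gmp (I T : R -> R -> R) : Prop :=
  forall x xt y, unit_int x -> unit_int xt -> unit_int y ->
    xt <= x -> T xt (I xt y) <= T x (I x y).

Definition tnormS (nf : nat) (T : R -> R -> R) (S : {set 'I_nf}) (a : 'I_nf -> R) : R :=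
  foldr (fun m acc => T (a m) acc) 1 (enum S).

End Fuzzy.

(* A rule R^{S,L}_j: class index j, feature set S, and one label index
   per feature (only the labels of features in S are meaningful). *)
Record rule (nf nc : nat) (l : 'I_nf -> nat) := Rule {
  rcls : 'I_nc;
  rS : {set 'I_nf};
  rL : forall m : 'I_nf, 'I_(l m) }.

Definition refines (nf nc : nat) (l : 'I_nf -> nat) (r rt : rule nc l) : Prop :=
  [/\ rcls rt = rcls r, rS r \proper rS rt & forall m, m \in rS r -> rL rt m = rL r m].

Section Eval.
Variable R : realFieldType.
Variables (nf nc : nat) (l : 'I_nf -> nat).
Variable mu : forall m : 'I_nf, 'I_(l m) -> R -> R.
Variable muClass : 'I_nc -> R -> R.
Variables (T I : R -> R -> R).

Definition mu_ant (r : rule nc l) (e : 'I_nf -> R) : R :=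
  tnormS T (rS r) (fun m => mu (rL r m) (e m)).

Definition mu_con (r : rule nc l) (y : R) : R := muClass (rcls r) y.

Definition mu_eval (r : rule nc l) (e : 'I_nf -> R) (y : R) : R :=
  T (mu_ant r e) (I (mu_ant r e) (mu_con r y)).
End Eval.

(* Main.v *)
Require Import Defs.
From mathcomp Require Import all_boot all_order all_algebra.
Import Order.TTheory GRing.Theory Num.Theory.
Local Open Scope ring_scope.

Section Aux.
Variable R : realFieldType.
Variable T : R -> R -> R.
Hypothesis hT : is_tnorm T.
Variable nf : nat.
Variable a : 'I_nf -> R.
Hypothesis ha : forall m, unit_int (a m).

Definition F (s : seq 'I_nf) := foldr (fun m acc => T (a m) acc) 1 s.

Lemma F_unit s : unit_int (F s).
Proof.
case: hT => hu _ _ _ _.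
elim: s => [|x s IH] /=; first by rewrite /unit_int ler01 lexx.
exact: hu.
Qed.

Lemma F_rem x s : x \in s -> F s = T (a x) (F (rem x s)).
Proof.
case: hT => hu hc has _ _.
elim: s => [//|z s IH] /=.
case: (eqVneq z x) => [-> //| nzx].
rewrite inE eq_sym (negbTE nzx) /= => hx.
rewrite IH //.
have u := F_unit (rem x s).
by rewrite (has (a z)) // (hc (a z) (a x)) // -has.
Qed.

Lemma F_mono s t : uniq s -> {subset s <= t} -> F t <= F s.
Proof.
case: hT => hu hc has hm h1.
elim: s t => [|x s IH] t /=.
  by move=> _ _; have /andP[] := F_unit t.
move=> /andP[xs us] sub.
have xt : x \in t by apply: sub; rewrite inE eqxx.
have u1 := F_unit (rem x t); have u2 := F_unit s.
rewrite (@F_rem x t xt); apply: hm; rewrite ?lexx //.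
apply: IH => // z zs; have zx : z != x by apply: contraNneq xs => <-.
by apply: rem_mem => //; apply: sub; rewrite inE zs orbT.
Qed.
End Aux.

Theorem proposition4 (R : realFieldType)
  (nf : nat) (D : 'I_nf -> pred R) (l : 'I_nf -> nat)
  (mu : forall m : 'I_nf, 'I_(l m) -> R -> R)
  (hmu : forall m (n : 'I_(l m)) x, x \in D m -> unit_int (mu m n x))
  (nc : nat) (DY : pred R) (muClass : 'I_nc -> R -> R)
  (hmuC : forall j x, x \in DY -> unit_int (muClass j x))
  (ne : nat) (e : 'I_ne -> 'I_nf -> R) (y : 'I_ne -> R)
  (he : forall d m, e d m \in D m) (hy : forall d, y d \in DY)
  (I T : R -> R -> R)
  (hI : is_fuzzy_implication I) (hT : is_tnorm T) (hMP : mon_gmp I T)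
  (j : 'I_nc) (r rt : rule nc l) :
  rcls r = j -> rcls rt = j -> refines r rt ->
  (forall d, mu_eval mu muClass T I rt (e d) (y d)
             <= mu_eval mu muClass T I r (e d) (y d)) /\
  \sum_(d < ne) mu_eval mu muClass T I rt (e d) (y d)
    <= \sum_(d < ne) mu_eval mu muClass T I r (e d) (y d).
Proof.
move=> hr hrt [_ hprop hL].
have key : forall d, mu_eval mu muClass T I rt (e d) (y d)
             <= mu_eval mu muClass T I r (e d) (y d).
  move=> d; rewrite /mu_eval /mu_con hr hrt.
  set a := fun m => mu m (rL rt m) (e d m).
  have ha : forall m, unit_int (a m) by move=> m; exact: (hmu m (rL rt m) _ (he d m)).
  have Ert : mu_ant mu T rt (e d) = @F _ T _ a (enum (rS rt)) by [].
  have Er : mu_ant mu T r (e d) = @F _ T _ a (enum (rS r)).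
    rewrite /mu_ant /tnormS /F; have : all (mem (rS r)) (enum (rS r)).
      by apply/allP => z; rewrite mem_enum; exact: id.
    elim: (enum (rS r)) => [//|z s IH] /= /andP[zr al].
    rewrite (IH al) /a (hL z _) //.
  rewrite Ert Er; apply: hMP; [exact: (F_unit _ _ hT _ _ ha _)|exact: (F_unit _ _ hT _ _ ha _)|exact: (hmuC _ _ (hy d))|].
  apply: (F_mono _ _ hT _ _ ha) => //; first exact: enum_uniq.
  move=> z; rewrite !mem_enum => zr.
  by have /andP[/subsetP H _] := hprop; apply: H.
split => //; exact: ler_sum.
Qed.
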